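(* For a semiring $(S,+,\cdot)$ the following are equivalent: (i) $S$ is a quasi completely regular semiring and $e+f=f+e$ for all $e,f\in E^+(S)$; (ii) $S$ is a b-lattice of quasi skew-rings and $e+f=f+e$ for all $e,f\in E^+(S)$; (iii) $S$ is additively quasi regular and $Reg^+S$ is a subsemigroup of $(S,+)$ which (as a semiring under the restricted operations) is a b-lattice of skew-rings.
   Context: A semiring $(S,+,\cdot)$ has two associative operations with $a(b+c)=ab+ac$, $(b+c)a=ba+ca$. $na$ is the $n$-fold sum of $a$. $E^+(S)$ is the set of additive idempotents; $Reg^+S$ is the set of additively regular elements ($a=a+x+a$ for some $x\in S$). $S$ is additively quasi regular if for each $a$ some $na$ is additively regular. $a$ is completely regular if there is $x$ with $a=a+x+a$, $a+x=x+a$, $a(a+x)=a+x$; $S$ is quasi completely regular if for each $a$ some $na$ is completely regular. A skew-ring is a semiring whose additive reduct is a (not necessarily commutative) group. A quasi skew-ring is a semiring $T$ containing a subsemiring $R$ which is a skew-ring such that for every $a\in T$ some $na\in R$. A b-lattice is a semiring with $(S,\cdot)$ a band and $(S,+)$ a semilattice; $S$ is a b-lattice of semirings of a class if there is a congruence $\rho$ on $S$ with $S/\rho$ a b-lattice and each $\rho$-class a subsemiring in that class. *)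

(* Defs.v *)
Set Implicit Arguments.

Record semiring := Semiring {
  carrier :> Type;
  sadd : carrier -> carrier -> carrier;
  smul : carrier -> carrier -> carrier;
  saddA : forall a b c, sadd a (sadd b c) = sadd (sadd a b) c;
  smulA : forall a b c, smul a (smul b c) = smul (smul a b) c;
  smulDr : forall a b c, smul a (sadd b c) = sadd (smul a b) (smul a c);
  smulDl : forall a b c, smul (sadd b c) a = sadd (smul b a) (smul c a)
}.

Arguments sadd {s}.
Arguments smul {s}.

Section Defs.
Variable SR : semiring.
Local Notation "a + b" := (sadd a b).
Local Notation "a * b" := (smul a b).

(* nsum n a = n * a, the n-fold sum of a, for n >= 1 (nsum 0 a := a is junk;
   we always quantify over n >= 1). *)
Fixpoint nsum (n : nat) (a : SR) : SR :=
  match n with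
  | 0 => a
  | S m => match m with 0 => a | S _ => sadd (nsum m a) a end
  end.

Definition add_idem (e : SR) : Prop := e + e = e.

Definition add_regular (a : SR) : Prop := exists x : SR, a = a + x + a.

Definition add_quasi_regular : Prop :=
  forall a : SR, exists n, 1 <= n /\ add_regular (nsum n a).

Definition completely_regular (a : SR) : Prop :=
  exists x : SR, a = a + x + a /\ a + x = x + a /\ a * (a + x) = a + x.

Definition quasi_completely_regular : Prop :=
  forall a : SR, exists n, 1 <= n /\ completely_regular (nsum n a).

Definition E_plus_commute : Prop :=
  forall e f : SR, add_idem e -> add_idem f -> e + f = f + e.

Definition add_closed (P : SR -> Prop) : Prop :=
  forall x y, P x -> P y -> P (x + y).
Definition mul_closed (P : SR -> Prop) : Prop :=
  forall x y, P x -> P y -> P (x * y).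
Definition subsemiring (P : SR -> Prop) : Prop := add_closed P /\ mul_closed P.

Definition skew_ring (P : SR -> Prop) : Prop :=
  exists z : SR, P z /\ (forall x, P x -> z + x = x /\ x + z = x) /\
    (forall x, P x -> exists y, P y /\ x + y = z /\ y + x = z).

Definition quasi_skew_ring (T : SR -> Prop) : Prop :=
  exists R : SR -> Prop, (forall x, R x -> T x) /\ subsemiring R /\ skew_ring R /\
    (forall a, T a -> exists n, 1 <= n /\ R (nsum n a)).

Definition congruence_on (P : SR -> Prop) (rho : SR -> SR -> Prop) : Prop :=
  (forall x y, rho x y -> P x /\ P y) /\
  (forall x, P x -> rho x x) /\
  (forall x y, rho x y -> rho y x) /\
  (forall x y z, rho x y -> rho y z -> rho x z) /\
  (forall x y u v, rho x y -> rho u v -> rho (x + u) (y + v) /\ rho (x * u) (y * v)).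

(* P/rho is a b-lattice: (P/rho, * ) is a band, (P/rho, +) a semilattice. *)
Definition quotient_b_lattice (P : SR -> Prop) (rho : SR -> SR -> Prop) : Prop :=
  forall x y, P x -> P y ->
    rho (x * x) x /\ rho (x + x) x /\ rho (x + y) (y + x).

Definition b_lattice_of (C : (SR -> Prop) -> Prop) (P : SR -> Prop) : Prop :=
  exists rho : SR -> SR -> Prop, congruence_on P rho /\ quotient_b_lattice P rho /\
    (forall x, P x -> subsemiring (rho x) /\ C (rho x)).

End Defs.

Definition Whole (S : semiring) : S -> Prop := fun _ => True.

(* Main.v *)
Require Import Defs.
From Stdlib Require Import Lia.

Section Gen.
Variable SR : semiring.
Local Infix "⊕" := (@sadd SR) (at level 50, left associativity).
Local Infix "⊗" := (@smul SR) (at level 40, left associativity).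

Lemma lift {p q r : SR} (H : p ⊕ q = r) (w : SR) : p ⊕ (q ⊕ w) = r ⊕ w.
Proof. rewrite saddA, H. reflexivity. Qed.

Lemma lift2 {p q s r : SR} (H : p ⊕ (q ⊕ s) = r) (w : SR) : p ⊕ (q ⊕ (s ⊕ w)) = r ⊕ w.
Proof. rewrite <- H. rewrite !saddA. reflexivity. Qed.
Lemma lift3 {p q s t r : SR} (H : p ⊕ (q ⊕ (s ⊕ t)) = r) (w : SR) :
  p ⊕ (q ⊕ (s ⊕ (t ⊕ w))) = r ⊕ w.
Proof. rewrite <- H. rewrite !saddA. reflexivity. Qed.

Ltac ra := repeat rewrite <- saddA.
Ltac sp H := repeat (first [rewrite H | rewrite (lift H) | rewrite (lift2 H) | rewrite (lift3 H)]; ra).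

Definition MI := forall e : SR, e ⊕ e = e -> e ⊗ e = e.
Definition EC := forall e f : SR, e ⊕ e = e -> f ⊕ f = f -> e ⊕ f = f ⊕ e.

Lemma EC_of : E_plus_commute SR -> EC.
Proof. intros H e f He Hf. apply H; assumption. Qed.

Lemma idem_mr (a e : SR) : e ⊕ e = e -> a ⊗ e ⊕ a ⊗ e = a ⊗ e.
Proof. intro H. rewrite <- smulDr, H. reflexivity. Qed.
Lemma idem_ml (e a : SR) : e ⊕ e = e -> e ⊗ a ⊕ e ⊗ a = e ⊗ a.
Proof. intro H. rewrite <- smulDl, H. reflexivity. Qed.

Lemma K1 (ec : EC) (mi : MI) (a b : SR) :
  a ⊕ b ⊕ a = a -> b ⊕ a ⊕ b = b -> a ⊕ b = b ⊕ a.
Proof.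
  intros H1 H2.
  assert (He : (a ⊕ b) ⊕ (a ⊕ b) = a ⊕ b) by (rewrite saddA, H1; reflexivity).
  assert (Hf : (b ⊕ a) ⊕ (b ⊕ a) = b ⊕ a) by (rewrite saddA, H2; reflexivity).
  assert (Hef : (a ⊕ b) ⊗ (b ⊕ a) = b ⊕ a).
  { rewrite smulDl.
    rewrite (ec _ _ (idem_mr a (b ⊕ a) Hf) (idem_mr b (b ⊕ a) Hf)).
    rewrite <- smulDl. apply mi, Hf. }
  rewrite <- (mi _ He). rewrite <- Hef.
  rewrite !smulDr. apply ec; apply idem_ml; exact He.
Qed.

Lemma nsum_S1 (k : nat) (a : SR) : nsum SR (S (S k)) a = nsum SR (S k) a ⊕ a.
Proof. reflexivity. Qed.

Lemma nsum_idem (n : nat) (e : SR) : e ⊕ e = e -> nsum SR n e = e.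
Proof.
  intro He. induction n as [|n IH]; [reflexivity|].
  destruct n as [|n]; [reflexivity|].
  rewrite nsum_S1, IH. exact He.
Qed.

Lemma MI_of_QCR : quasi_completely_regular SR -> MI.
Proof.
  intros Q e He. destruct (Q e) as [n [_ [x [H1 [H2 H3]]]]].
  rewrite (nsum_idem n e He) in H1, H2, H3.
  assert (Hk : e ⊕ x = e).
  { rewrite H2. transitivity (x ⊕ (e ⊕ e)); [rewrite He; reflexivity|].
    rewrite saddA, <- H2. symmetry; exact H1. }
  rewrite Hk in H3. exact H3.
Qed.

Definition InG (e x : SR) := e ⊕ e = e /\ e ⊕ x = x /\ x ⊕ e = x /\
  exists y, x ⊕ y = e /\ y ⊕ x = e /\ e ⊕ y = y /\ y ⊕ e = y.

Lemma InG_of_inv (ec : EC) (mi : MI) (a b : SR) :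
  a ⊕ b ⊕ a = a -> b ⊕ a ⊕ b = b -> InG (a ⊕ b) a.
Proof.
  intros H1 H2. pose proof (K1 ec mi a b H1 H2) as C.
  split; [rewrite saddA, H1; reflexivity|].
  split; [exact H1|].
  split; [rewrite C, saddA, H1; reflexivity|].
  exists b. split; [reflexivity|]. split; [symmetry; exact C|].
  split; [rewrite C; exact H2| rewrite saddA; exact H2].
Qed.

Lemma reg_inv (a : SR) : add_regular SR a -> exists b, a ⊕ b ⊕ a = a /\ b ⊕ a ⊕ b = b.
Proof.
  intros [x Hx]. exists (x ⊕ a ⊕ x).
  assert (Hr : a ⊕ (x ⊕ a) = a) by (rewrite saddA; symmetry; exact Hx).
  split; ra; sp Hr; reflexivity.
Qed.

Lemma reg_InG (ec : EC) (mi : MI) (a : SR) : add_regular SR a -> exists e, InG e a.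
Proof.
  intro H. destruct (reg_inv a H) as [b [H1 H2]].
  exists (a ⊕ b). apply InG_of_inv; assumption.
Qed.

Lemma InG_reg (e x : SR) : InG e x -> add_regular SR x.
Proof.
  intros [_ [Hex [Hxe [y [Hxy _]]]]]. exists y. rewrite Hxy, Hex. reflexivity.
Qed.

Lemma InG_unique (e f x : SR) : InG e x -> InG f x -> e = f.
Proof.
  intros [_ [Hex [_ [y [Hxy [Hyx _]]]]]] [_ [Hfx [Hxf [y' [Hxy' _]]]]].
  assert (E1 : e ⊕ f = e).
  { rewrite <- Hyx. rewrite <- saddA, Hxf. reflexivity. }
  assert (E2 : e ⊕ f = f).
  { rewrite <- Hxy'. rewrite saddA, Hex. reflexivity. }
  rewrite <- E1. exact E2.
Qed.

Lemma InG_inv (e x : SR) : InG e x -> exists y, InG e y /\ x ⊕ y = e /\ y ⊕ x = e.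
Proof.
  intros [He [Hex [Hxe [y [Hxy [Hyx [Hey Hye]]]]]]].
  exists y. split; [|split; assumption].
  split; [exact He|]. split; [exact Hey|]. split; [exact Hye|].
  exists x. repeat split; assumption.
Qed.

Lemma InG_idem (k : SR) : k ⊕ k = k -> InG k k.
Proof. intro H. repeat split; try exact H. exists k. repeat split; exact H. Qed.

Lemma cent (ec : EC) (mi : MI) (e f x : SR) : e ⊕ e = e -> InG f x -> e ⊕ x = x ⊕ e.
Proof.
  intros He [Hf [Hfx [Hxf [y [Hxy [Hyx [Hfy Hyf]]]]]]].
  pose proof (ec e f He Hf) as Cef.
  assert (P1 : (x ⊕ e) ⊕ (e ⊕ y) ⊕ (x ⊕ e) = x ⊕ e).
  { ra. sp He. sp Hyx. rewrite <- Cef. sp He. rewrite Cef. sp Hxf. reflexivity. }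
  assert (P2 : (e ⊕ y) ⊕ (x ⊕ e) ⊕ (e ⊕ y) = e ⊕ y).
  { ra. sp He. sp Hyx. rewrite (lift (eq_sym Cef)). ra. sp He. sp Hfy. reflexivity. }
  pose proof (K1 ec mi _ _ P1 P2) as K.
  assert (K' : x ⊕ (e ⊕ y) = e ⊕ f).
  { revert K. ra. sp He. sp Hyx. rewrite <- Cef. sp He. auto. }
  rewrite <- Hfx at 1. rewrite saddA, <- K'. ra. sp Hyx. rewrite Cef. sp Hxf. reflexivity.
Qed.

Lemma InG_add (ec : EC) (mi : MI) (e f x u : SR) :
  InG e x -> InG f u -> InG (e ⊕ f) (x ⊕ u).
Proof.
  intros Hx Hu.
  destruct (InG_inv e x Hx) as [x' [Hx' [Hxx' Hx'x]]].
  destruct (InG_inv f u Hu) as [u' [Hu' [Huu' Hu'u]]].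
  destruct Hx as [He [Hex [Hxe _]]]. destruct Hu as [Hf [Hfu [Huf _]]].
  destruct Hx' as [_ [Hex' [Hx'e _]]]. destruct Hu' as [_ [Hfu' [Hu'f _]]].
  pose proof (ec e f He Hf) as Cef.
  assert (Q1 : (x ⊕ u) ⊕ (u' ⊕ x') ⊕ (x ⊕ u) = x ⊕ u).
  { ra. sp Huu'. sp Hx'x. rewrite (lift (eq_sym Cef)). ra. sp Hxe. sp Hfu. reflexivity. }
  assert (Q2 : (u' ⊕ x') ⊕ (x ⊕ u) ⊕ (u' ⊕ x') = u' ⊕ x').
  { ra. sp Hx'x. sp Huu'. rewrite (lift Cef). ra. sp Hu'f. sp Hex'. reflexivity. }
  pose proof (InG_of_inv ec mi _ _ Q1 Q2) as G.
  assert (Id : (x ⊕ u) ⊕ (u' ⊕ x') = e ⊕ f).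
  { ra. sp Huu'.
    assert (Hx'G : InG e x').
    { destruct (InG_inv e x (conj He (conj Hex (conj Hxe (ex_intro _ x' (conj Hxx' (conj Hx'x (conj Hex' Hx'e)))))))) as [z [Hz _]].
      split; [exact He|]. split; [exact Hex'|]. split; [exact Hx'e|].
      exists x. repeat split; assumption. }
    rewrite (cent ec mi f e x' Hf Hx'G). sp Hxx'. reflexivity. }
  rewrite Id in G. exact G.
Qed.

Lemma InG_mulR (f u x : SR) : InG f u -> InG (x ⊗ f) (x ⊗ u).
Proof.
  intros [Hf [Hfu [Huf [y [Huy [Hyu [Hfy Hyf]]]]]]].
  split; [apply idem_mr, Hf|].
  split; [rewrite <- smulDr, Hfu; reflexivity|].
  split; [rewrite <- smulDr, Huf; reflexivity|].
  exists (x ⊗ y).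
  split; [rewrite <- smulDr, Huy; reflexivity|].
  split; [rewrite <- smulDr, Hyu; reflexivity|].
  split; [rewrite <- smulDr, Hfy; reflexivity|].
  rewrite <- smulDr, Hyf; reflexivity.
Qed.

Lemma InG_mulL (e x u : SR) : InG e x -> InG (e ⊗ u) (x ⊗ u).
Proof.
  intros [Hf [Hfu [Huf [y [Huy [Hyu [Hfy Hyf]]]]]]].
  split; [apply idem_ml, Hf|].
  split; [rewrite <- smulDl, Hfu; reflexivity|].
  split; [rewrite <- smulDl, Huf; reflexivity|].
  exists (y ⊗ u).
  split; [rewrite <- smulDl, Huy; reflexivity|].
  split; [rewrite <- smulDl, Hyu; reflexivity|].
  split; [rewrite <- smulDl, Hfy; reflexivity|].
  rewrite <- smulDl, Hyf; reflexivity.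
Qed.

Lemma InG_mul (e f x u : SR) : InG e x -> InG f u -> InG (e ⊗ f) (x ⊗ u).
Proof.
  intros Hx Hu.
  pose proof (InG_mulL e x u Hx) as H1.
  pose proof (InG_mulR f u e Hu) as H2.
  assert (H3 : InG (e ⊗ u) (e ⊗ u)).
  { apply InG_idem, idem_ml. destruct Hx as [He _]; exact He. }
  rewrite (InG_unique _ _ _ H2 H3). exact H1.
Qed.


Fixpoint ns (k : nat) (a : SR) : SR :=
  match k with 0 => a | S k' => ns k' a ⊕ a end.

Lemma nsum_ns (k : nat) (a : SR) : nsum SR (S k) a = ns k a.
Proof.
  induction k as [|k IH]; [reflexivity|].
  rewrite nsum_S1, IH. reflexivity.
Qed.

Lemma ns_add (k m : nat) (a : SR) : ns (k + S m) a = ns k a ⊕ ns m a.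
Proof.
  induction m as [|m IH].
  - replace (k + 1) with (S k) by lia. reflexivity.
  - rewrite <- plus_n_Sm. simpl. rewrite IH, saddA. reflexivity.
Qed.

Lemma ns_ns (k m : nat) (a : SR) : ns k (ns m a) = ns (k * S m + m) a.
Proof.
  induction k as [|k IH]; [reflexivity|].
  simpl ns at 1. rewrite IH, <- ns_add. f_equal. lia.
Qed.

Lemma ns_comm (k m : nat) (a : SR) : ns k (ns m a) = ns m (ns k a).
Proof. rewrite !ns_ns. f_equal. lia. Qed.

Lemma ns_mull (k : nat) (a b : SR) : ns k a ⊗ b = ns k (a ⊗ b).
Proof. induction k as [|k IH]; [reflexivity|]. simpl. rewrite smulDl, IH. reflexivity. Qed.

Lemma ns_mulr (k : nat) (a b : SR) : a ⊗ ns k b = ns k (a ⊗ b).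
Proof. induction k as [|k IH]; [reflexivity|]. simpl. rewrite smulDr, IH. reflexivity. Qed.

Lemma reg_mulr (a b : SR) : add_regular SR a -> add_regular SR (a ⊗ b).
Proof. intros [x Hx]. exists (x ⊗ b). rewrite <- !smulDl, <- Hx. reflexivity. Qed.

Lemma reg_mull (a b : SR) : add_regular SR b -> add_regular SR (a ⊗ b).
Proof. intros [x Hx]. exists (a ⊗ x). rewrite <- !smulDr, <- Hx. reflexivity. Qed.

Lemma idem_reg (e : SR) : e ⊕ e = e -> add_regular SR e.
Proof. intro H. exists e. rewrite !H. reflexivity. Qed.


Lemma grp_idem (P : SR -> Prop) (z p : SR) :
  (forall x, P x -> z ⊕ x = x /\ x ⊕ z = x) ->
  (forall x, P x -> exists y, P y /\ x ⊕ y = z /\ y ⊕ x = z) ->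
  P p -> p ⊕ p = p -> p = z.
Proof.
  intros Hid Hinv Hp Hpp. destruct (Hinv p Hp) as [q [_ [Hpq _]]].
  transitivity (p ⊕ z); [symmetry; apply (proj2 (Hid p Hp))|].
  rewrite <- Hpq. rewrite saddA, Hpp. reflexivity.
Qed.

Lemma grp_lid (P : SR -> Prop) (z c e : SR) :
  (forall x, P x -> exists y, P y /\ x ⊕ y = z /\ y ⊕ x = z) ->
  P c -> e ⊕ c = c -> e ⊕ z = z.
Proof.
  intros Hinv Hc Hec. destruct (Hinv c Hc) as [c' [_ [H1 _]]].
  rewrite <- H1. rewrite saddA, Hec. reflexivity.
Qed.

Lemma grp_rid (P : SR -> Prop) (z d e : SR) :
  (forall x, P x -> exists y, P y /\ x ⊕ y = z /\ y ⊕ x = z) ->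
  P d -> d ⊕ e = d -> z ⊕ e = z.
Proof.
  intros Hinv Hd Hde. destruct (Hinv d Hd) as [d' [_ [_ H2]]].
  rewrite <- H2. rewrite <- saddA, Hde. reflexivity.
Qed.

Lemma ii_to_i : b_lattice_of SR (quasi_skew_ring SR) (Whole SR) -> quasi_completely_regular SR.
Proof.
  intros [rho [[C1 [C2 [C3 [C4 C5]]]] [Q Hcl]]] a.
  destruct (Hcl a I) as [_ [R [HRT [[RA RM] [[z [Hz [Hzid Hinv]]] Hn]]]]].
  destruct (Hn a (C2 a I)) as [n [Hn1 HRb]].
  exists n. split; [exact Hn1|].
  destruct (Hinv _ HRb) as [y [Hy [Hby Hyb]]].
  exists y.
  split; [rewrite Hby; symmetry; apply (proj1 (Hzid _ HRb))|].
  split; [rewrite Hby, Hyb; reflexivity|].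
  rewrite Hby. apply (grp_idem R z); auto.
  apply idem_mr. apply (proj1 (Hzid z Hz)).
Qed.

Lemma i_to_iii : quasi_completely_regular SR -> E_plus_commute SR ->
  add_quasi_regular SR /\ add_closed SR (add_regular SR) /\ mul_closed SR (add_regular SR) /\
  b_lattice_of SR (skew_ring SR) (add_regular SR).
Proof.
  intros Q E. pose proof (EC_of E) as ec. pose proof (MI_of_QCR Q) as mi.
  split.
  { intro a. destruct (Q a) as [n [Hn [x [Hx _]]]]. exists n. split; [exact Hn|]. exists x; exact Hx. }
  split.
  { intros x y Hx Hy. destruct (reg_InG ec mi x Hx) as [e He].
    destruct (reg_InG ec mi y Hy) as [f Hf].
    apply (InG_reg (e ⊕ f)). apply InG_add; auto. }
  split.
  { intros x y Hx _. apply reg_mulr; exact Hx. }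
  exists (fun x y => exists e, InG e x /\ InG e y).
  split.
  { split. { intros x y [e [Hx Hy]]. split; eapply InG_reg; eauto. }
    split. { intros x Hx. destruct (reg_InG ec mi x Hx) as [e He]. exists e; split; auto. }
    split. { intros x y [e [H1 H2]]; exists e; split; auto. }
    split. { intros x y z [e [H1 H2]] [f [H3 H4]]. exists e. split; auto.
             rewrite (InG_unique _ _ _ H2 H3). auto. }
    intros x y u v [e [H1 H2]] [f [H3 H4]]. split.
    - exists (e ⊕ f). split; apply InG_add; auto.
    - exists (e ⊗ f). split; apply InG_mul; auto. }
  split.
  { intros x y Hx Hy. destruct (reg_InG ec mi x Hx) as [e He].
    destruct (reg_InG ec mi y Hy) as [f Hf].
    split. { exists e. split; auto. pose proof (InG_mul _ _ _ _ He He) as G.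
             rewrite (mi e (proj1 He)) in G. exact G. }
    split. { exists e. split; auto. pose proof (InG_add ec mi _ _ _ _ He He) as G.
             rewrite (proj1 He) in G. exact G. }
    exists (e ⊕ f). split; [apply InG_add; auto|].
    rewrite (ec e f (proj1 He) (proj1 Hf)). apply InG_add; auto. }
  intros x Hx. destruct (reg_InG ec mi x Hx) as [e He].
  assert (cls : forall y, (exists e', InG e' x /\ InG e' y) -> InG e y).
  { intros y [e' [H1 H2]]. rewrite (InG_unique _ _ _ He H1). exact H2. }
  split. split.
  - intros y z Hy Hz. exists e. split; auto. apply cls in Hy. apply cls in Hz.
    pose proof (InG_add ec mi _ _ _ _ Hy Hz) as G. rewrite (proj1 He) in G. exact G.
  - intros y z Hy Hz. exists e. split; auto. apply cls in Hy. apply cls in Hz.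
    pose proof (InG_mul _ _ _ _ Hy Hz) as G. rewrite (mi e (proj1 He)) in G. exact G.
  - exists e. split; [exists e; split; auto; apply InG_idem, (proj1 He)|].
    split.
    + intros y Hy. apply cls in Hy. destruct Hy as [_ [H1 [H2 _]]]. split; auto.
    + intros y Hy. apply cls in Hy. destruct (InG_inv e y Hy) as [y' [Hy' [H1 H2]]].
      exists y'. split; [exists e; split; auto|]. split; auto.
Qed.

Section III.
Variable rho : SR -> SR -> Prop.
Hypothesis Hcg : congruence_on SR (add_regular SR) rho.
Hypothesis Hq : quotient_b_lattice SR (add_regular SR) rho.
Hypothesis Hcl : forall x, add_regular SR x -> subsemiring SR (rho x) /\ skew_ring SR (rho x).
Hypothesis AQR : forall a, exists k, add_regular SR (ns k a).
Hypothesis RC : add_closed SR (add_regular SR).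

Local Notation Reg := (add_regular SR).

Lemma r_reg x y : rho x y -> Reg x /\ Reg y.
Proof. apply (proj1 Hcg). Qed.
Lemma r_refl x : Reg x -> rho x x.
Proof. apply (proj1 (proj2 Hcg)). Qed.
Lemma r_sym x y : rho x y -> rho y x.
Proof. apply (proj1 (proj2 (proj2 Hcg))). Qed.
Lemma r_trans x y z : rho x y -> rho y z -> rho x z.
Proof. apply (proj1 (proj2 (proj2 (proj2 Hcg)))). Qed.
Lemma r_add x y u v : rho x y -> rho u v -> rho (x ⊕ u) (y ⊕ v).
Proof. intros H1 H2. apply (proj2 (proj2 (proj2 (proj2 Hcg))) x y u v H1 H2). Qed.
Lemma r_mul x y u v : rho x y -> rho u v -> rho (x ⊗ u) (y ⊗ v).
Proof. intros H1 H2. apply (proj2 (proj2 (proj2 (proj2 Hcg))) x y u v H1 H2). Qed.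
Lemma r_sq x : Reg x -> rho (x ⊗ x) x.
Proof. intro H. apply (Hq x x H H). Qed.
Lemma r_dbl x : Reg x -> rho (x ⊕ x) x.
Proof. intro H. apply (Hq x x H H). Qed.
Lemma r_comm x y : Reg x -> Reg y -> rho (x ⊕ y) (y ⊕ x).
Proof. intros H1 H2. apply (Hq x y H1 H2). Qed.

Lemma r_ns k x : Reg x -> rho (ns k x) x.
Proof.
  intro H. induction k as [|k IH]; [apply r_refl; exact H|].
  simpl. apply (r_trans _ (x ⊕ x)); [apply r_add; auto; apply r_refl; auto| apply r_dbl; auto].
Qed.

Lemma r_cons k m a : Reg (ns k a) -> Reg (ns m a) -> rho (ns k a) (ns m a).
Proof.
  intros Hk Hm. pose proof (r_ns m _ Hk) as H1. pose proof (r_ns k _ Hm) as H2.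
  rewrite ns_comm in H1. exact (r_trans _ _ _ (r_sym _ _ H1) H2).
Qed.

Definition Phi a b := exists k, Reg (ns k a) /\ rho (ns k a) b.

Lemma Phi_uniq a b c : Phi a b -> Phi a c -> rho b c.
Proof.
  intros [k [Hk H1]] [m [Hm H2]].
  apply (r_trans _ (ns k a)); [apply r_sym; auto|].
  apply (r_trans _ (ns m a)); auto. apply r_cons; auto.
Qed.
Lemma Phi_self x : Reg x -> Phi x x.
Proof. intro H. exists 0. split; [exact H| apply r_refl; exact H]. Qed.
Lemma Phi_r a b c : Phi a b -> rho b c -> Phi a c.
Proof. intros [k [Hk H1]] H. exists k. split; auto. apply (r_trans _ b); auto. Qed.
Lemma Phi_reg a b : Phi a b -> Reg b.
Proof. intros [k [Hk H1]]. apply (r_reg _ _ H1). Qed.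
Lemma Phi_rho x b : Reg x -> Phi x b -> rho x b.
Proof. intros H1 H2. apply (Phi_uniq x); auto. apply Phi_self; auto. Qed.
Lemma Phi_ex a : exists b, Phi a b.
Proof. destruct (AQR a) as [k Hk]. exists (ns k a). exists k. split; auto. apply r_refl; auto. Qed.

Lemma Phi_mul a b c d : Phi a b -> Phi c d -> Phi (a ⊗ c) (b ⊗ d).
Proof.
  intros [k [Hk H1]] [m [Hm H2]]. exists (k * S m + m).
  rewrite <- ns_ns, <- ns_mulr, <- ns_mull.
  split; [apply reg_mulr; auto| apply r_mul; auto].
Qed.

Lemma Phi_add a b c d : Phi a b -> Phi c d -> Phi (a ⊕ c) (b ⊕ d).
Proof.
  intros Ha Hc. pose proof (Phi_reg _ _ Ha) as Rb. pose proof (Phi_reg _ _ Hc) as Rd.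
  destruct (Phi_ex (a ⊕ c)) as [t Ht]. pose proof (Phi_reg _ _ Ht) as Rt.
  apply (Phi_r _ _ _ Ht).
  assert (R1 : rho (b ⊗ t) (b ⊕ b ⊗ d)).
  { assert (A1 : rho (b ⊗ (a ⊕ c)) (b ⊗ t)).
    { apply Phi_rho; [apply reg_mulr; auto|]. apply Phi_mul; auto. apply Phi_self; auto. }
    rewrite smulDr in A1.
    apply (r_trans _ _ _ (r_sym _ _ A1)). apply r_add.
    - apply (r_trans _ (b ⊗ b)); [|apply r_sq; auto].
      apply Phi_rho; [apply reg_mulr; auto|]. apply Phi_mul; auto. apply Phi_self; auto.
    - apply Phi_rho; [apply reg_mulr; auto|]. apply Phi_mul; auto. apply Phi_self; auto. }
  assert (R3 : rho (d ⊗ t) (d ⊗ b ⊕ d)).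
  { assert (A1 : rho (d ⊗ (a ⊕ c)) (d ⊗ t)).
    { apply Phi_rho; [apply reg_mulr; auto|]. apply Phi_mul; auto. apply Phi_self; auto. }
    rewrite smulDr in A1.
    apply (r_trans _ _ _ (r_sym _ _ A1)). apply r_add.
    - apply Phi_rho; [apply reg_mulr; auto|]. apply Phi_mul; auto. apply Phi_self; auto.
    - apply (r_trans _ (d ⊗ d)); [|apply r_sq; auto].
      apply Phi_rho; [apply reg_mulr; auto|]. apply Phi_mul; auto. apply Phi_self; auto. }
  assert (R5 : rho t (b ⊗ t ⊕ d ⊗ t)).
  { assert (A1 : rho ((a ⊕ c) ⊗ t) (t ⊗ t)).
    { apply Phi_rho; [apply reg_mull; auto|]. apply Phi_mul; auto. apply Phi_self; auto. }
    apply (r_trans _ (t ⊗ t)); [apply r_sym, r_sq; auto|].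
    apply (r_trans _ _ _ (r_sym _ _ A1)). rewrite smulDl. apply r_add.
    - apply Phi_rho; [apply reg_mull; auto|]. apply Phi_mul; auto. apply Phi_self; auto.
    - apply Phi_rho; [apply reg_mull; auto|]. apply Phi_mul; auto. apply Phi_self; auto. }
  assert (Rbd : Reg (b ⊕ d)) by (apply RC; auto).
  apply (r_trans _ _ _ R5). apply (r_trans _ _ _ (r_add _ _ _ _ R1 R3)).
  apply (r_trans _ ((b ⊕ d) ⊗ (b ⊕ d))); [|apply r_sq; auto].
  rewrite smulDl, !smulDr. apply r_sym. apply r_add; apply r_add.
  - apply r_sq; auto.
  - apply r_refl, reg_mulr; auto.
  - apply r_refl, reg_mulr; auto.
  - apply r_sq; auto.
Qed.

Lemma EC_iii : E_plus_commute SR.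
Proof.
  intros e f He Hf. unfold add_idem in He, Hf.
  pose proof (idem_reg e He) as Re. pose proof (idem_reg f Hf) as Rf.
  assert (Ru : Reg (e ⊕ f)) by (apply RC; auto).
  assert (Huv : rho (e ⊕ f) (f ⊕ e)) by (apply r_comm; auto).
  destruct (Hcl _ Ru) as [_ [z [Hz [Hid Hinv]]]].
  assert (Heu : e ⊕ (e ⊕ f) = e ⊕ f) by (rewrite saddA, He; reflexivity).
  assert (Hez : e ⊕ z = z).
  { apply (grp_lid _ z (e ⊕ z) e Hinv).
    - pose proof (r_add _ _ _ _ (r_refl e Re) Hz) as G. rewrite Heu in G. exact G.
    - rewrite saddA, He. reflexivity. }
  assert (Hze : z ⊕ e = z).
  { apply (grp_rid _ z (z ⊕ e) e Hinv).
    - pose proof (r_add _ _ _ _ (r_sym _ _ Hz) (r_refl e Re)) as G.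
      pose proof (r_comm (e ⊕ f) e Ru Re) as G2. rewrite Heu in G2.
      apply (r_trans _ _ _ (r_sym _ _ G2)). apply r_sym. exact G.
    - rewrite <- saddA, He. reflexivity. }
  assert (E2 : e ⊕ (f ⊕ e) = f ⊕ e).
  { rewrite <- (proj1 (Hid _ Huv)) at 1. rewrite saddA, Hez. apply (proj1 (Hid _ Huv)). }
  assert (E4 : (e ⊕ f) ⊕ e = e ⊕ f).
  { rewrite <- (proj2 (Hid _ (r_refl _ Ru))) at 1. rewrite <- saddA, Hze.
    apply (proj2 (Hid _ (r_refl _ Ru))). }
  rewrite <- E4, <- saddA. exact E2.
Qed.

Definition sig a b := exists c, Phi a c /\ Phi b c.

Lemma iii_bl : b_lattice_of SR (quasi_skew_ring SR) (Whole SR).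
Proof.
  exists sig. split.
  { split; [intros; split; exact I|].
    split. { intros x _. destruct (Phi_ex x) as [c Hc]; exists c; auto. }
    split. { intros x y [c [H1 H2]]; exists c; auto. }
    split. { intros x y z [c [H1 H2]] [c' [H3 H4]]. exists c. split; auto.
             apply (Phi_r _ _ _ H4). apply r_sym, (Phi_uniq _ _ _ H2 H3). }
    intros x y u v [c [H1 H2]] [d [H3 H4]].
    split; [exists (c ⊕ d)|exists (c ⊗ d)]; split;
      first [apply Phi_add; auto | apply Phi_mul; auto]. }
  split.
  { intros x y _ _. destruct (Phi_ex x) as [c Hc]. destruct (Phi_ex y) as [d Hd].
    pose proof (Phi_reg _ _ Hc) as Rc. pose proof (Phi_reg _ _ Hd) as Rd.
    split. { exists c. split; auto. apply (Phi_r _ _ _ (Phi_mul _ _ _ _ Hc Hc)). apply r_sq; auto. }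
    split. { exists c. split; auto. apply (Phi_r _ _ _ (Phi_add _ _ _ _ Hc Hc)). apply r_dbl; auto. }
    exists (c ⊕ d). split; [apply Phi_add; auto|].
    apply (Phi_r _ _ _ (Phi_add _ _ _ _ Hd Hc)). apply r_comm; auto. }
  intros x _. destruct (Phi_ex x) as [c0 Hc0]. pose proof (Phi_reg _ _ Hc0) as Rc0.
  assert (sP : forall y, sig x y -> Phi y c0).
  { intros y [c [H1 H2]]. apply (Phi_r _ _ _ H2). apply (Phi_uniq _ _ _ H1 Hc0). }
  split. split.
  - intros y z Hy Hz. exists c0. split; auto.
    apply (Phi_r _ _ _ (Phi_add _ _ _ _ (sP _ Hy) (sP _ Hz))). apply r_dbl; auto.
  - intros y z Hy Hz. exists c0. split; auto.
    apply (Phi_r _ _ _ (Phi_mul _ _ _ _ (sP _ Hy) (sP _ Hz))). apply r_sq; auto.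
  - exists (rho c0). split.
    { intros w Hw. exists c0. split; auto. apply (Phi_r w w c0).
      - apply Phi_self, (r_reg _ _ Hw).
      - apply r_sym; auto. }
    split; [apply (Hcl c0 Rc0)|]. split; [apply (Hcl c0 Rc0)|].
    intros a Ha. destruct (sP _ Ha) as [k [Hk Hr]]. exists (S k). split; [lia|].
    rewrite nsum_ns. apply r_sym; auto.
Qed.

End III.

Lemma iii_to_ii : add_quasi_regular SR -> add_closed SR (add_regular SR) ->
  b_lattice_of SR (skew_ring SR) (add_regular SR) ->
  b_lattice_of SR (quasi_skew_ring SR) (Whole SR) /\ E_plus_commute SR.
Proof.
  intros AQ RC [rho [Hcg [Hq Hcl]]].
  assert (AQR : forall a, exists k, add_regular SR (ns k a)).
  { intro a. destruct (AQ a) as [n [Hn Hr]]. destruct n as [|n]; [lia|].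
    exists n. rewrite <- nsum_ns. exact Hr. }
  split.
  - apply (@iii_bl rho); assumption.
  - apply (@EC_iii rho); assumption.
Qed.

End Gen.

Theorem theorem3p7 (S : semiring) :
  (quasi_completely_regular S /\ E_plus_commute S <->
   @b_lattice_of S (@quasi_skew_ring S) (Whole S) /\ E_plus_commute S) /\
  (@b_lattice_of S (@quasi_skew_ring S) (Whole S) /\ E_plus_commute S <->
   add_quasi_regular S /\ @add_closed S (@add_regular S) /\ @mul_closed S (@add_regular S) /\
   @b_lattice_of S (@skew_ring S) (@add_regular S)).
Proof.
  split; split.
  - intros [Q E]. destruct (i_to_iii S Q E) as [A [B [_ C]]]. apply iii_to_ii; auto.
  - intros [B E]. split; auto. apply ii_to_i; auto.
  - intros [B E]. apply i_to_iii; auto. apply ii_to_i; auto.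
  - intros [A [B [_ C]]]. apply iii_to_ii; auto.
Qed.
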